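(* Let $\delta_1=1/32$, $\delta_2=1/4$, and $$U=\{(x,y,0): 1-\delta_1<x\leq 1,\ -\delta_2<y<\delta_2\},\quad V=\{(x,y,0): -1\leq x<-1+\delta_1,\ -\delta_2<y<\delta_2\},$$ $$W=\{(x,y,z): -\delta_2<x<\delta_2,\ 1-\delta_1<y\leq 1,\ 0\leq z<\delta_2\}.$$ Let $A=(0,-1,0)$, let $S^1=\{(x,y,0):x^2+y^2=1\}$ and $S^2_{\geq 0}=\{(x,y,z):x^2+y^2+z^2=1,\ z\geq 0\}$. Then for any $B\in U\cap S^1$, $C\in V\cap S^1$, $D\in W\cap S^2_{\geq 0}$, $$AB+BC+CA+DA+DB+DC\leq 4+4\sqrt{2},$$ where $PQ$ denotes the Euclidean distance between $P$ and $Q$. *)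

(* Defs.v *)
From Stdlib Require Import Reals.
Open Scope R_scope.

Definition pt := (R * R * R)%type.

Definition dist3 (P Q : pt) : R :=
  let '(x1, y1, z1) := P in let '(x2, y2, z2) := Q in
  sqrt ((x1 - x2)^2 + (y1 - y2)^2 + (z1 - z2)^2).

Definition delta1 : R := 1/32.
Definition delta2 : R := 1/4.

Definition inU (P : pt) : Prop :=
  let '(x, y, z) := P in 1 - delta1 < x <= 1 /\ - delta2 < y < delta2 /\ z = 0.
Definition inV (P : pt) : Prop :=
  let '(x, y, z) := P in -1 <= x < -1 + delta1 /\ - delta2 < y < delta2 /\ z = 0.
Definition inW (P : pt) : Prop :=
  let '(x, y, z) := P in - delta2 < x < delta2 /\ 1 - delta1 < y <= 1 /\ 0 <= z < delta2.

Definition inS1 (P : pt) : Prop :=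
  let '(x, y, z) := P in x^2 + y^2 = 1 /\ z = 0.
Definition inS2plus (P : pt) : Prop :=
  let '(x, y, z) := P in x^2 + y^2 + z^2 = 1 /\ 0 <= z.

Definition ptA : pt := (0, -1, 0).

(* Main.v *)
Require Import Defs.
From Stdlib Require Import Reals Lra Psatz.
Open Scope R_scope.
Lemma ua (b1 b2 c1 c2 : R) :
  b1^2+b2^2 = 1 -> c1^2+c2^2=1 -> 31/32 < b1 -> c1 < -31/32 ->
  -1/4 < b2 < 1/4 -> -1/4 < c2 < 1/4 -> (b1+c1)^2 <= (b2+c2)^2/15.
Proof.
intros.
assert (E: (b1+c1)*(b1-c1) = -(b2+c2)*(b2-c2)) by nra.
assert (E2: (b1+c1)^2*(b1-c1)^2 = (b2+c2)^2*(b2-c2)^2) by (rewrite <- !Rpow_mult_distr; rewrite E; ring).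
assert ((b2-c2)^2 <= 1/4) by (assert (0 < (b2-c2+1/2)*(1/2-(b2-c2))) by (apply Rmult_lt_0_compat; lra); nra).
assert ((b1-c1)^2 >= 15/4) by (assert (31/16 < b1-c1) by lra; nra).
assert (0 <= (b1+c1)^2) by apply pow2_ge_0.
assert (0 <= (b2+c2)^2) by apply pow2_ge_0.
assert ((b1+c1)^2*(15/4) <= (b1+c1)^2*(b1-c1)^2) by (apply Rmult_le_compat_l; lra).
assert ((b2+c2)^2*(b2-c2)^2 <= (b2+c2)^2*(1/4)) by (apply Rmult_le_compat_l; lra).
lra.
Qed.
Lemma eb (d1 d2 : R) : d1^2+d2^2 <= 1 -> 31/32 < d2 -> d1^2 <= 2*(1-d2).
Proof. intros. nra. Qed.
Lemma poly (b1 b2 c1 c2 d1 d2 : R) :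
  b1^2+b2^2 = 1 -> c1^2+c2^2=1 -> 31/32 < b1 -> c1 < -31/32 ->
  -1/4 < b2 < 1/4 -> -1/4 < c2 < 1/4 -> d1^2+d2^2 <= 1 -> 31/32 < d2 -> -1/4 < d1 < 1/4 ->
  (b1+c1)^2 <= (b2+c2)^2/15 -> d1^2 <= 2*(1-d2) -> d2 <= 1 ->
  (b2+c2 - d1*(b1+c1) - d2*(b2+c2))/2 - (b2^2+c2^2+(d1*b1+d2*b2)^2+(d1*c1+d2*c2)^2)/10
   <= 707/1000 * ((b1+c1)^2+(b2+c2)^2+2*(1-d2))/4.
Proof.
intros.
assert (K1: (d1*b1+d2*b2)^2+(d1*c1+d2*c2)^2 >= (d1*(b1-c1)+d2*(b2-c2))^2/2).
{ pose proof (pow2_ge_0 ((d1*b1+d2*b2)+(d1*c1+d2*c2))). nra. }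
assert (K2: -d1*(b1+c1)/2 <= 7/10*(b1+c1)^2 + d1^2/(16*(7/10))).
{ pose proof (pow2_ge_0 (d1/(4*(7/10)) + (b1+c1))). nra. }
assert (K3: (1-d2)*(b2+c2) <= (1-d2)/2) by nra.
assert (K4: (d1*(b1-c1)+d2*(b2-c2))^2 >= (d1*(b1-c1))^2/2 - (d2*(b2-c2))^2).
{ pose proof (pow2_ge_0 (d1*(b1-c1)+2*(d2*(b2-c2)))). nra. }
assert (K5: (d2*(b2-c2))^2 <= (b2-c2)^2).
{ rewrite Rpow_mult_distr. assert (d2^2 <= 1) by nra. pose proof (pow2_ge_0 (b2-c2)). nra. }
assert (K6: (d1*(b1-c1))^2 >= 15/4*d1^2).
{ rewrite Rpow_mult_distr. assert (31/16 < b1-c1) by lra. assert ((b1-c1)^2>=15/4) by nra. pose proof (pow2_ge_0 d1). nra. }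
pose proof (pow2_ge_0 d1). pose proof (pow2_ge_0 (b1+c1)). pose proof (pow2_ge_0 (b2+c2)). pose proof (pow2_ge_0 (b2-c2)).
lra.
Qed.

Lemma sqrt_le_y (x y : R) : 0 <= y -> x <= y^2 -> sqrt x <= y.
Proof.
intros Hy Hx. rewrite <- (sqrt_pow2 y Hy). apply sqrt_le_1_alt. exact Hx.
Qed.

Lemma L1 (t : R) : -1/2 <= t <= 1/2 -> sqrt (2+2*t) <= sqrt 2 * (1 + t/2 - t^2/10).
Proof.
intros H.
replace (2+2*t) with (2*(1+t)) by ring.
rewrite sqrt_mult_alt by lra.
apply Rmult_le_compat_l. apply sqrt_pos.
apply sqrt_le_y. nra.
assert (0 <= t^2*(1/20 - t/10 + t^2/100)).
{ apply Rmult_le_pos. apply pow2_ge_0. nra. }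
nra.
Qed.

Lemma L2 (x : R) : sqrt x <= 1 + x/4 \/ x < 0.
Proof.
destruct (Rle_or_lt 0 x) as [H|H]; [left|right; exact H].
apply sqrt_le_y. lra. pose proof (pow2_ge_0 (x-4)). nra.
Qed.

Lemma sqrt2_bound : sqrt 2 * (707/1000) <= 1.
Proof.
assert (sqrt 2 <= 14143/10000) by (apply sqrt_le_y; lra).
pose proof (sqrt_pos 2). lra.
Qed.

Theorem theorem2 (B C D : pt) :
  inU B -> inS1 B -> inV C -> inS1 C -> inW D -> inS2plus D ->
  dist3 ptA B + dist3 B C + dist3 C ptA + dist3 D ptA + dist3 D B + dist3 D C
    <= 4 + 4 * sqrt 2.
Proof.
destruct B as [[b1 b2] b3]. destruct C as [[c1 c2] c3]. destruct D as [[d1 d2] d3].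
unfold inU, inV, inW, inS1, inS2plus, dist3, ptA, delta1, delta2.
intros [HB1 [HB2 HB3]] [HB4 _] [HC1 [HC2 HC3]] [HC4 _] [HD1 [HD2 HD3]] [HD4 HD5].
subst b3 c3.
assert (b1p : 31/32 < b1) by lra.
assert (c1n : c1 < -31/32) by lra.
assert (Hd : d1^2+d2^2 <= 1) by nra.
assert (Hd2 : d2 <= 1) by nra.
assert (EAB : (0-b1)^2+(-1-b2)^2+(0-0)^2 = 2+2*b2) by nra.
assert (EAC : (c1-0)^2+(c2- -1)^2+(0-0)^2 = 2+2*c2) by nra.
assert (EDB : (d1-b1)^2+(d2-b2)^2+(d3-0)^2 = 2+2*(-(d1*b1+d2*b2))) by nra.
assert (EDC : (d1-c1)^2+(d2-c2)^2+(d3-0)^2 = 2+2*(-(d1*c1+d2*c2))) by nra.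
assert (EDA : (d1-0)^2+(d2- -1)^2+(d3-0)^2 = 2+2*d2) by nra.
assert (EBC : (b1-c1)^2+(b2-c2)^2+(0-0)^2 = 2-2*(b1*c1+b2*c2)) by nra.
rewrite EAB, EAC, EDB, EDC, EDA, EBC.
assert (tB : -1/2 <= -(d1*b1+d2*b2) <= 1/2).
{ assert (Rabs b1 <= 1) by (apply Rabs_le; nra). split; nra. }
assert (tC : -1/2 <= -(d1*c1+d2*c2) <= 1/2).
{ split; nra. }
pose proof (L1 b2 ltac:(lra)) as S1.
pose proof (L1 c2 ltac:(lra)) as S2.
pose proof (L1 _ tB) as S3.
pose proof (L1 _ tC) as S4.
assert (XBC : 0 <= 2-2*(b1*c1+b2*c2)) by nra.
destruct (L2 (2-2*(b1*c1+b2*c2))) as [S5|S5]; [|lra].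
destruct (L2 (2+2*d2)) as [S6|S6]; [|lra].
pose proof (poly b1 b2 c1 c2 d1 d2 HB4 HC4 b1p c1n ltac:(lra) ltac:(lra) Hd ltac:(lra) ltac:(lra)
   (ua b1 b2 c1 c2 HB4 HC4 b1p c1n ltac:(lra) ltac:(lra)) (eb d1 d2 Hd ltac:(lra)) Hd2) as P.
set (Lq := (b2+c2 - d1*(b1+c1) - d2*(b2+c2))/2 - (b2^2+c2^2+(d1*b1+d2*b2)^2+(d1*c1+d2*c2)^2)/10) in P.
set (Rq := ((b1+c1)^2+(b2+c2)^2+2*(1-d2))/4) in P.
assert (R0 : 0 <= Rq).
{ unfold Rq. pose proof (pow2_ge_0 (b1+c1)). pose proof (pow2_ge_0 (b2+c2)). lra. }
assert (M : sqrt 2 * Lq <= Rq).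
{ pose proof sqrt2_bound. pose proof (sqrt_pos 2).
  apply Rle_trans with (sqrt 2 * (707/1000 * Rq)).
  apply Rmult_le_compat_l; [lra|]. unfold Lq, Rq in *; clear -P; lra. rewrite <- Rmult_assoc.
  pose proof (Rmult_le_compat_r Rq _ _ R0 sqrt2_bound). lra. }
unfold Lq, Rq in M, R0, P. clear Lq Rq.
assert (Hsum : sqrt 2 * (1 + b2/2 - b2^2/10) + sqrt 2 * (1 + c2/2 - c2^2/10)
   + sqrt 2 * (1 + -(d1*b1+d2*b2)/2 - (-(d1*b1+d2*b2))^2/10)
   + sqrt 2 * (1 + -(d1*c1+d2*c2)/2 - (-(d1*c1+d2*c2))^2/10) = 4 * sqrt 2 + sqrt 2 * ((b2+c2 - d1*(b1+c1) - d2*(b2+c2))/2 - (b2^2+c2^2+(d1*b1+d2*b2)^2+(d1*c1+d2*c2)^2)/10)) by field.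
assert (HR : 1 + (2-2*(b1*c1+b2*c2))/4 + (1 + (2+2*d2)/4) = 4 - (((b1+c1)^2+(b2+c2)^2+2*(1-d2))/4)) by nra.
lra.
Qed.
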